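(* Let $G$ be any graph of order $n$ and let $H$ be any graph with a root vertex $v$. Then $$\rho(G\circ_v H)=\begin{cases}\rho(G)+n(\rho(H)-1), & \text{if } v\in P_H \text{ for every maximum packing } P_H \text{ of } H,\\ n\rho(H), & \text{if } v\notin P_H \text{ for some maximum packing } P_H \text{ of } H.\end{cases}$$
   Context: All graphs are finite and simple. A packing of $G$ is a set $P\subseteq V(G)$ with $N[u]\cap N[v]=\emptyset$ for all distinct $u,v\in P$ ($N[\cdot]$ the closed neighborhood); $\rho(G)$ is the maximum size of a packing. Given $G$ with $V(G)=\{g_1,\dots,g_n\}$ and a graph $H$ with root $v\in V(H)$, the rooted product $G\circ_v H$ has vertex set $V(G)\times V(H)$ and edge set $\bigcup_{i=1}^n\{(g_i,h)(g_i,h'): hh'\in E(H)\}\cup\{(g_i,v)(g_j,v): g_ig_j\in E(G)\}$ (i.e., a copy of $H$ is attached to each vertex of $G$ by identifying its root with that vertex). *)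

(* Defs.v *)
From mathcomp Require Import all_boot.
Set Implicit Arguments. Unset Strict Implicit. Unset Printing Implicit Defensive.

Definition simple_graph (T : finType) (e : rel T) : Prop :=
  symmetric e /\ irreflexive e.

Definition cnbhd (T : finType) (e : rel T) (u : T) : {set T} :=
  [set w | (w == u) || e u w].

Definition packing (T : finType) (e : rel T) (P : {set T}) : bool :=
  [forall u in P, forall w in P, (u != w) ==> [disjoint cnbhd e u & cnbhd e w]].

Definition rho (T : finType) (e : rel T) : nat :=
  \max_(P : {set T} | packing e P) #|P|.

Definition max_packing (T : finType) (e : rel T) (P : {set T}) : bool :=
  packing e P && (#|P| == rho e).

Definition rooted_prod (TG TH : finType) (eG : rel TG) (eH : rel TH) (v : TH)
  : rel (TG * TH) :=
  fun x y => ((x.1 == y.1) && eH x.2 y.2)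
             || [&& x.2 == v, y.2 == v & eG x.1 y.1].

(* Main.v *)
Require Import Defs.
From mathcomp Require Import all_boot zify.
Set Implicit Arguments. Unset Strict Implicit. Unset Printing Implicit Defensive.

Lemma packingP (T : finType) (e : rel T) (P : {set T}) :
  reflect (forall u w x, u \in P -> w \in P -> x \in cnbhd e u -> x \in cnbhd e w -> u = w)
          (packing e P).
Proof.
apply: (iffP forall_inP) => H.
- move=> u w x uP wP xu xw; apply/eqP; apply: contraTT isT => neq.
  have /forall_inP/(_ w wP) := H u uP. rewrite neq /= => /disjointFr /(_ xu).
  by rewrite xw.
- move=> u uP; apply/forall_inP => w wP; apply/implyP => neq.
  rewrite disjoint_subset; apply/subsetP => x xu; rewrite inE; apply/negP => xw. by move/eqP: neq; apply; apply: H xu xw.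
Qed.

Lemma rho_ge (T : finType) (e : rel T) P : packing e P -> #|P| <= rho e.
Proof. move=> hP; rewrite /rho; exact: (@leq_bigmax_cond _ (fun P => packing e P) (fun P : {set T} => #|P|) P hP). Qed.

Lemma rho_le (T : finType) (e : rel T) k :
  (forall P, packing e P -> #|P| <= k) -> rho e <= k.
Proof. move=> H; apply/bigmax_leqP => P; exact: H. Qed.

Lemma rho_ex (T : finType) (e : rel T) : exists P, packing e P /\ #|P| = rho e.
Proof.
have h0 : packing e set0 by apply/packingP => u w x; rewrite in_set0.
have hc : 0 < #|[pred P : {set T} | packing e P]|.
  by apply/card_gt0P; exists set0.
have [P hP hm] := eq_bigmax_cond (fun P : {set T} => #|P|) hc.
by exists P; split => //; rewrite /rho hm.
Qed.

Lemma cnbhdE (TG TH : finType) (eG : rel TG) (eH : rel TH) (v : TH) g h a b :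
  ((a,b) \in cnbhd (rooted_prod eG eH v) (g,h)) =
  ((a == g) && ((b == h) || eH h b)) || [&& h == v, b == v & eG g a].
Proof.
rewrite inE /rooted_prod /= xpair_eqE (eq_sym g a).
by case: (a == g) => //=; rewrite orbA.
Qed.

Lemma card_fib (TG TH : finType) (P : {set TG * TH}) :
  #|P| = \sum_(g : TG) #|[set h | (g,h) \in P]|.
Proof.
rewrite -sum1_card big_mkcond /=.
rewrite [RHS](eq_bigr (fun g => \sum_(h : TH) (if (g,h) \in P then 1 else 0))).
  by rewrite pair_big /=; apply: eq_bigr => [[g h]] _.
move=> g _; rewrite -sum1_card big_mkcond /=.
by apply: eq_bigr => h _; rewrite inE.
Qed.

Lemma proj_packing (TG TH : finType) (eG : rel TG) (eH : rel TH) (v : TH) P g :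
  packing (rooted_prod eG eH v) P -> packing eH [set h | (g,h) \in P].
Proof.
move/packingP=> hP; apply/packingP => u w x; rewrite !inE => uP wP xu xw.
have := hP (g,u) (g,w) (g,x) uP wP; rewrite !cnbhdE eqxx xu xw /=.
by move=> /(_ isT isT) [].
Qed.

Lemma nbF1 (TG TH : finType) (eG : rel TG) (eH : rel TH) (v : TH) g a b :
  (a,b) \in cnbhd (rooted_prod eG eH v) (g,v) -> b \in cnbhd eH v.
Proof.
rewrite cnbhdE inE; case/orP => [/andP [_ ->] //| /and3P [_ /eqP -> _]].
by rewrite eqxx.
Qed.

Lemma nbF2 (TG TH : finType) (eG : rel TG) (eH : rel TH) (v : TH) g h a b :
  h != v -> (a,b) \in cnbhd (rooted_prod eG eH v) (g,h) -> a = g /\ b \in cnbhd eH h.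
Proof.
move=> /negbTE hv; rewrite cnbhdE hv /= orbF inE => /andP [/eqP -> ->] //.
Qed.

Lemma rhoH_pos (TH : finType) (eH : rel TH) (v : TH) : 1 <= rho eH.
Proof.
have -> : 1 = #|[set v]| by rewrite cards1.
apply: rho_ge; apply/packingP => u w x; rewrite !inE => /eqP -> /eqP -> //.
Qed.

Theorem mainTheorem15 (TG TH : finType) (eG : rel TG) (eH : rel TH) (v : TH)
  (hG : simple_graph eG) (hH : simple_graph eH) :
  ((forall P : {set TH}, max_packing eH P -> v \in P) ->
     rho (rooted_prod eG eH v) = rho eG + #|TG| * (rho eH - 1)) /\
  ((exists P : {set TH}, max_packing eH P /\ v \notin P) ->
     rho (rooted_prod eG eH v) = #|TG| * rho eH).
Proof.
set E := rooted_prod eG eH v.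
have ubH : forall P, packing E P -> forall g, #|[set h | (g,h) \in P]| <= rho eH.
  by move=> P hP g; apply: rho_ge; apply: proj_packing hP.
have r1 := rhoH_pos eH v.
split.
- move=> Hall; apply/eqP; rewrite eqn_leq; apply/andP; split.
  + apply: rho_le => P hP; rewrite card_fib.
    set A := [set g | #|[set h | (g,h) \in P]| == rho eH].
    have hA : packing eG A.
      have inP : forall g, g \in A -> (g, v) \in P.
        move=> g; rewrite inE => gA.
        have : v \in [set h | (g,h) \in P].
          by apply: Hall; rewrite /max_packing gA (proj_packing _ hP).
        by rewrite inE.
      apply/packingP => g g' x gA g'A xg xg'.
      have := (elimT (packingP _ _) hP) (g,v) (g',v) (x,v) (inP _ gA) (inP _ g'A).
      rewrite /E !cnbhdE !eqxx /= !andbT.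
      move: xg xg'; rewrite !inE.
      by case/orP => [->|->]; case/orP => [->|->]; rewrite ?orbT => /(_ isT isT) [].
    apply: (@leq_trans (\sum_(g : TG) ((g \in A) + (rho eH - 1)))).
      apply: leq_sum => g _; have := ubH P hP g.
      case: (boolP (g \in A)) => gA /=; rewrite inE in gA.
        by move/eqP: gA => ->; lia.
      move/eqP: gA => ne le; rewrite add0n subn1 -ltnS prednK // ltn_neqAle le andbT; exact/eqP.
    rewrite big_split /= sum_nat_const.
    have -> : \sum_(i : TG) ((i \in A) : nat) = #|A|.
      by rewrite -sum1_card [RHS]big_mkcond; apply: eq_bigr => i _; case: (i \in A).
    have -> : #|(xpredT : pred TG)| = #|TG| by [].
    have := rho_ge hA; lia.
  + have [PG [hPG cPG]] := rho_ex eG.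
    have [PH [hPH cPH]] := rho_ex eH.
    have vPH : v \in PH by apply: Hall; rewrite /max_packing hPH cPH eqxx.
    pose Q := setX PG [set v] :|: setX [set: TG] (PH :\ v).
    have cQ : #|Q| = rho eG + #|TG| * (rho eH - 1).
      have d : setX PG [set v] :&: setX [set: TG] (PH :\ v) = set0.
        apply/setP => [[g h]]; rewrite !inE /=.
        by case: (h == v); rewrite ?andbF.
      rewrite cardsU d cards0 subn0 !cardsX cards1 cardsT muln1 cPG.
      by have := cardsD1 v PH; rewrite vPH cPH /= => ->; rewrite add1n subn1.
    rewrite -cQ; apply: rho_ge.
    move/packingP: hPG => hPG; move/packingP: hPH => hPH.
    apply/packingP => [[g h] [g' h'] [a b]] uQ wQ xu xw; move: uQ wQ; rewrite !inE /=.
    have key : forall g h, (g \in PG) && (h == v) || (h != v) && (h \in PH) ->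
        (h = v /\ g \in PG) \/ (h != v /\ h \in PH).
      by move=> g0 h0; case/orP => /andP [p q]; [left; split => //; apply/eqP|right].
    move=> /key [[eh gP]|[hv hP]] /key [[eh' gP']|[hv' hP']]; subst.
    *
      case: (boolP (b == v)) => bv.
      - move/eqP: bv xu xw => ->; rewrite /E !cnbhdE !eqxx /= !andbT.
        move=> xu xw; congr (_, _); apply: (hPG g g' a gP gP'); rewrite inE.
          by case/orP: xu => [->|->]; rewrite ?orbT.
        by case/orP: xw => [->|->]; rewrite ?orbT.
      - move: xu xw; rewrite /E !cnbhdE (negbTE bv) /= !andbF !orbF.
        by move=> /andP [/eqP <- _] /andP [/eqP <- _].
    * have := hPH v h' b vPH hP' (nbF1 xu) (nbF2 hv' xw).2.
      by move=> e; rewrite e eqxx in hv'.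
    * have := hPH v h b vPH hP (nbF1 xw) (nbF2 hv xu).2.
      by move=> e; rewrite e eqxx in hv.
    * have [e1 b1] := nbF2 hv xu; have [e2 b2] := nbF2 hv' xw.
      by rewrite -e1 -e2 (hPH h h' b hP hP' b1 b2).
- case=> PH [/andP [hPH /eqP cPH] vPH].
  apply/eqP; rewrite eqn_leq; apply/andP; split.
  + apply: rho_le => P hP; rewrite card_fib.
    apply: (@leq_trans (\sum_(g : TG) rho eH)); first by apply: leq_sum => g _; exact: ubH.
    by rewrite sum_nat_const.
  + rewrite -cPH -cardsT -cardsX; apply: rho_ge.
    move/packingP: hPH => hPH.
    apply/packingP => [[g h] [g' h'] [a b]]; move=> uQ wQ xu xw; move: uQ wQ; rewrite !inE /= => hP hP'.
    have hv : h != v by apply: contraNneq vPH => <-.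
    have hv' : h' != v by apply: contraNneq vPH => <-.
    have [e1 b1] := nbF2 hv xu; have [e2 b2] := nbF2 hv' xw.
    by rewrite -e1 -e2 (hPH h h' b hP hP' b1 b2).
Qed.
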